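(* Let $z\in\mathcal N_h^I$ and $w_h,v_h\in\mathbb V_h$. If $(w_h-v_h)(z)\ge(w_h-v_h)(z')$ for all $z'\in\widetilde{\mathcal N}_{\mathfrak h}(z)$, then $$S^+_{\mathfrak h}w_h(z)\le S^+_{\mathfrak h}v_h(z),\qquad S^-_{\mathfrak h}w_h(z)\ge S^-_{\mathfrak h}v_h(z),$$ and $-\Delta^\diamond_{\infty,\mathfrak h}w_h(z)\ge-\Delta^\diamond_{\infty,\mathfrak h}v_h(z)$.
   Context: Setting: $\Omega\subset\mathbb R^d$ ($d\ge1$) is a bounded domain with continuous boundary. For $r>0$, $\Omega^{(r)}=\{x\in\Omega:\operatorname{dist}(x,\partial\Omega)>r\}$. $\mathcal T_h$ is a mesh of closed simplices, $h=\max_T\operatorname{diam}T$, $\Omega_h$ the interior of the union of the simplices, with $\Omega^{(h)}\subset\Omega_h\subset\Omega$; $\mathcal N_h$ the set of vertices. $\mathbb V_h$: continuous piecewise linear functions on $\mathcal T_h$ with hat basis $\{\hat\varphi_z\}_{z\in\mathcal N_h}$ ($\hat\varphi_z(z')=\delta_{zz'}$), and $\mathcal I_h$ the Lagrange interpolant. Parameters $\mathfrak h=(h,\varepsilon,\theta)$, $\varepsilon\in[h,\operatorname{diam}\Omega]$, $0<\theta\le1$. $\mathcal N_h^I=\mathcal N_h\cap\Omega^{(2\varepsilon)}$. $\mathbb S_\theta$: finite symmetric subset of the unit sphere $\mathbb S$ such that each $v\in\mathbb S$ has $v_\theta\in\mathbb S_\theta$ with $|v-v_\theta|\le\theta$.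 For $z\in\mathcal N_h^I$: $\mathcal N_{\mathfrak h}(z)=\{z\}\cup\{z+\varepsilon v_\theta:v_\theta\in\mathbb S_\theta\}$; for $w\in C(\overline\Omega)$, $S^+_{\mathfrak h}w(z)=\varepsilon^{-1}(\max_{x\in\mathcal N_{\mathfrak h}(z)}w(x)-w(z))$, $S^-_{\mathfrak h}w(z)=\varepsilon^{-1}(w(z)-\min_{x\in\mathcal N_{\mathfrak h}(z)}w(x))$, $-\Delta^\diamond_{\infty,\mathfrak h}w(z)=-\varepsilon^{-1}(S^+_{\mathfrak h}\mathcal I_hw(z)-S^-_{\mathfrak h}\mathcal I_hw(z))$; and $\widetilde{\mathcal N}_{\mathfrak h}(z)=\{z\}\cup\{z'\in\mathcal N_h:\exists v_\theta\in\mathbb S_\theta,\ \hat\varphi_{z'}(z+\varepsilon v_\theta)>0\}$. *)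

(* Defs.v *)
From HB Require Import structures.
From mathcomp Require Import all_boot all_order all_algebra.
From mathcomp Require Import all_classical all_reals all_analysis.
Set Implicit Arguments. Unset Strict Implicit. Unset Printing Implicit Defensive.
Import Order.TTheory GRing.Theory Num.Theory.
Import numFieldNormedType.Exports.
Local Open Scope classical_set_scope.
Local Open Scope ring_scope.

Section Defs.
Variables (R : realType) (d : nat).
Notation pt := 'rV[R]_d.

Definition enorm (x : pt) : R := Num.sqrt (\sum_(i < d) x ord0 i ^+ 2).

Definition bdry (A : set pt) : set pt := closure A `\` interior A.
Definition dist_to (x : pt) (A : set pt) : R := inf [set enorm (x - y) | y in A].
Definition ediam (A : set pt) : R :=
  sup [set r | exists x y, A x /\ A y /\ r = enorm (x - y)].

Definition inner_set (Omega : set pt) (r : R) : set pt :=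
  [set x | Omega x /\ r < dist_to x (bdry Omega)].

Definition is_domain (Omega : set pt) : Prop :=
  open Omega /\ connected Omega /\ Omega !=set0 /\ bounded_set Omega.

Definition chull (s : seq pt) : set pt :=
  [set x | exists lam : 'I_(size s) -> R,
     (forall i, 0 <= lam i) /\ \sum_i lam i = 1 /\
     x = \sum_i lam i *: nth 0 s i].

Definition simplex (P : 'I_d.+1 -> pt) : set pt :=
  [set x | exists lam : 'I_d.+1 -> R,
     (forall i, 0 <= lam i) /\ \sum_i lam i = 1 /\ x = \sum_i lam i *: P i].

Definition vert_list (P : 'I_d.+1 -> pt) : seq pt := [seq P i | i <- enum 'I_d.+1].

Definition aff_indep (P : 'I_d.+1 -> pt) : Prop :=
  \det (\matrix_(i < d, j < d) (P (lift ord0 i) - P ord0) ord0 j) != 0.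

Section Mesh.
Variables (n : nat) (T : 'I_n -> 'I_d.+1 -> pt).

Definition meshsize : R := \big[Num.max/0]_(k < n) ediam (simplex (T k)).

Definition Omega_h : set pt := interior (\bigcup_(k in setT) simplex (T k)).

Definition vertices : seq pt := undup (flatten [seq vert_list (T k) | k <- enum 'I_n]).

Definition conforming : Prop :=
  forall k l, simplex (T k) `&` simplex (T l) =
    chull [seq x <- vert_list (T k) | x \in vert_list (T l)].

Definition is_mesh (Omega : set pt) : Prop :=
  (forall k, aff_indep (T k)) /\ conforming /\
  inner_set Omega meshsize `<=` Omega_h /\ Omega_h `<=` Omega.

Definition affine_on (S : set pt) (f : pt -> R) : Prop :=
  exists (a : pt) (b : R), forall x, S x -> f x = \sum_(i < d) a ord0 i * x ord0 i + b.

(** V_h : (continuous) piecewise linear functions on the mesh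
    (only the values on the closure of Omega_h matter). *)
Definition Vh (f : pt -> R) : Prop := forall k, affine_on (simplex (T k)) f.

Definition hat_basis (phi : pt -> pt -> R) : Prop :=
  (forall z, z \in vertices -> Vh (phi z)) /\
  (forall z z', z \in vertices -> z' \in vertices ->
     phi z z' = if z == z' then 1 else 0).

Definition interp (phi : pt -> pt -> R) (w : pt -> R) : pt -> R :=
  fun x => \sum_(z <- vertices) w z * phi z x.

End Mesh.

Definition dir_set (theta : R) (Sth : seq pt) : Prop :=
  (forall v, v \in Sth -> enorm v = 1) /\
  (forall v, v \in Sth -> - v \in Sth) /\
  (forall v : pt, enorm v = 1 -> exists2 vt, vt \in Sth & enorm (v - vt) <= theta).

Section Stencil.
Variables (eps : R) (Sth : seq pt).

Definition stencil (z : pt) : seq pt := z :: [seq z + eps *: v | v <- Sth].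

Definition Splus (w : pt -> R) (z : pt) : R :=
  eps^-1 * (\big[Num.max/w z]_(x <- stencil z) w x - w z).
Definition Sminus (w : pt -> R) (z : pt) : R :=
  eps^-1 * (w z - \big[Num.min/w z]_(x <- stencil z) w x).

Definition neg_lap_diam n (T : 'I_n -> 'I_d.+1 -> pt) (phi : pt -> pt -> R)
  (w : pt -> R) (z : pt) : R :=
  - eps^-1 * (Splus (interp T phi w) z - Sminus (interp T phi w) z).

Definition interior_node n (T : 'I_n -> 'I_d.+1 -> pt) (Omega : set pt) (z : pt) : Prop :=
  z \in vertices T /\ inner_set Omega (2 * eps) z.

Definition Ntilde n (T : 'I_n -> 'I_d.+1 -> pt) (phi : pt -> pt -> R) (z : pt) : set pt :=
  [set z] `|` [set z' | z' \in vertices T /\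
                  exists2 v, v \in Sth & 0 < phi z' (z + eps *: v)].

End Stencil.
End Defs.

(* Main.v *)
Require Import Defs.
From HB Require Import structures.
From mathcomp Require Import all_boot all_order all_algebra.
From mathcomp Require Import all_classical all_reals all_analysis.
From mathcomp Require Import ring lra.
Import Order.TTheory GRing.Theory Num.Theory.
Import numFieldNormedType.Exports.
Local Open Scope classical_set_scope.
Local Open Scope ring_scope.

Section H.
Variables (R : realType) (d : nat).
Implicit Types (a b x y : 'rV[R]_d).

Lemma enorm_ge0 x : 0 <= enorm x.
Proof. exact: sqrtr_ge0. Qed.

Lemma enormZ (c : R) x : enorm (c *: x) = `|c| * enorm x.
Proof.
rewrite /enorm -sqrtr_sqr -sqrtrM ?sqr_ge0 // mulr_sumr.
by congr Num.sqrt; apply: eq_bigr => i _; rewrite mxE exprMn.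
Qed.

Lemma enormN x : enorm (- x) = enorm x.
Proof. by rewrite -scaleN1r enormZ normrN normr1 mul1r. Qed.

Lemma CS (a b : 'I_d -> R) :
  (\sum_i a i * b i) ^+ 2 <= (\sum_i a i ^+ 2) * (\sum_i b i ^+ 2).
Proof.
set A := \sum_i a i ^+ 2; set B := \sum_i b i ^+ 2; set C := \sum_i a i * b i.
have E : \sum_i \sum_j (a i * b j - a j * b i) ^+ 2 = A * B + B * A - 2 * (C * C).
  transitivity (\sum_i \sum_j (a i ^+ 2 * b j ^+ 2 + b i ^+ 2 * a j ^+ 2
                               - 2 * ((a i * b i) * (a j * b j)))).
    by apply: eq_bigr => i _; apply: eq_bigr => j _; ring.
  have e1 : \sum_i \sum_j a i ^+ 2 * b j ^+ 2 = A * B.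
    by rewrite /A /B mulr_suml; apply: eq_bigr => i _; rewrite mulr_sumr.
  have e2 : \sum_i \sum_j b i ^+ 2 * a j ^+ 2 = B * A.
    by rewrite /A /B mulr_suml; apply: eq_bigr => i _; rewrite mulr_sumr.
  have e3 : \sum_i \sum_j (a i * b i) * (a j * b j) = C * C.
    by rewrite /C mulr_suml; apply: eq_bigr => i _; rewrite mulr_sumr.
  rewrite -e1 -e2 -e3 mulr_sumr -big_split -sumrB /=.
  apply: eq_bigr => i _; rewrite mulr_sumr -big_split -sumrB /=.
  by apply: eq_bigr => j _.
have : 0 <= \sum_i \sum_j (a i * b j - a j * b i) ^+ 2.
  by apply: sumr_ge0 => i _; apply: sumr_ge0 => j _; exact: sqr_ge0.
rewrite E => H; rewrite expr2; lra.
Qed.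

Lemma enormD a b : enorm (a + b) <= enorm a + enorm b.
Proof.
have ha := enorm_ge0 a; have hb := enorm_ge0 b.
rewrite /enorm.
set A := \sum_i a ord0 i ^+ 2; set B := \sum_i b ord0 i ^+ 2.
set C := \sum_i a ord0 i * b ord0 i.
have hA : 0 <= A by apply: sumr_ge0 => i _; exact: sqr_ge0.
have hB : 0 <= B by apply: sumr_ge0 => i _; exact: sqr_ge0.
have -> : \sum_i (a + b) ord0 i ^+ 2 = A + B + 2 * C.
  rewrite /A /B /C mulr_sumr -!big_split /=; apply: eq_bigr => i _.
  rewrite mxE; ring.
have hC : C <= Num.sqrt A * Num.sqrt B.
  rewrite -sqrtrM //; apply: le_trans (ler_norm C) _.
  rewrite -sqrtr_sqr; apply: ler_wsqrtr; exact: CS.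
rewrite -[X in _ <= X]ger0_norm ?addr_ge0 ?sqrtr_ge0 // -sqrtr_sqr.
apply: ler_wsqrtr.
rewrite sqrrD !sqr_sqrtr //; lra.
Qed.
Lemma enorm_sub_sym x y : enorm (x - y) = enorm (y - x).
Proof. by rewrite -enormN opprB. Qed.

Lemma dist_lb (A : set 'rV[R]_d) x y : A y -> dist_to x A <= enorm (x - y).
Proof.
move=> Ay; rewrite /dist_to.
have : has_lbound [set enorm (x - y0) | y0 in A].
  by exists 0 => r [y0 _ <-]; exact: enorm_ge0.
by move/ge_inf; apply; exists y.
Qed.

Lemma stencil_in (Omega : set 'rV[R]_d) (n : nat) (T : 'I_n -> 'I_d.+1 -> 'rV[R]_d)
  (eps : R) (z v : 'rV[R]_d) :
  is_domain Omega -> is_mesh T Omega -> 0 <= eps -> meshsize T <= eps ->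
  inner_set Omega (2 * eps) z -> enorm v = 1 ->
  exists k, simplex (T k) (z + eps *: v).
Proof.
move=> [oO _] [_ [_ [sub _]]] e0 hme [Oz dz] nv.
have Bne : (bdry Omega) !=set0.
  apply/set0P/negP => /eqP B0; move: dz; rewrite /dist_to B0 image_set0 inf0.
  lra.
have far y : (bdry Omega) y -> 2 * eps < enorm (z - y).
  by move=> By; apply: (lt_le_trans dz); exact: dist_lb.
set w := eps *: v.
have nw : enorm w = eps by rewrite /w enormZ nv mulr1 ger0_norm.
pose f : R -> 'rV[R]_d := fun t => z + t *: w.
have cf : continuous f.
  move=> t.
  have := (@continuousD R _ R (fun=> z) (fun t0 : R => t0 *: w) t).
  apply; [exact: cst_continuous | exact: scalel_continuous].
have cS : connected (f @` `[0, 1]%classic).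
  apply: connected_continuous_connected; first exact: segment_connected.
  exact: continuous_subspaceT.
have noB t : `[0, 1]%classic t -> ~ (bdry Omega) (f t).
  rewrite /= in_itv /= => /andP[t0 t1] /far.
  rewrite /f opprD addrA subrr add0r enormN enormZ nw ger0_norm //.
  have : t * eps <= eps by rewrite -[X in _ <= X]mul1r; apply: ler_wpM2r.
  lra.
have SO : f @` `[0, 1]%classic `&` Omega = f @` `[0, 1]%classic.
  apply: cS.
  - exists z; split; last by [].
    exists 0; first by rewrite /= in_itv /= lexx ler01.
    by rewrite /f scale0r addr0.
  - by exists Omega.
  - exists (closure Omega); first exact: closed_closure.
    apply/seteqP; split => y [Sy Oy]; split => //; first exact: subset_closure.
    apply: contrapT => nOy; case: Sy => t ht ft.
    apply: (noB t ht); rewrite ft; split => //.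
    by move/interior_id : oO => ->.
have Ox : Omega (z + w).
  have : (f @` `[0, 1]%classic) (z + w).
    exists 1; first by rewrite /= in_itv /= lexx ler01.
    by rewrite /f scale1r.
  by rewrite -SO => -[].
have : Omega_h T (z + w).
  apply: sub; split => //.
  have : dist_to z (bdry Omega) - eps <= dist_to (z + w) (bdry Omega).
    apply: lb_le_inf.
      by case: Bne => y By; exists (enorm (z + w - y)); exists y.
    move=> r [y By <-].
    have := enormD (z - (z + w)) (z + w - y).
    rewrite addrA subrK opprD addrA subrr add0r enormN nw.
    have := @dist_lb _ z _ By; lra.
  lra.
move/interior_subset => [k _ hk]; by exists k.
Qed.

Lemma delta_sum (i : 'I_d.+1) :
  \sum_j (if j == i then 1 else 0) = 1 :> R.
Proof.
by rewrite (bigD1 i) //= eqxx big1 ?addr0 // => j /negbTE ->.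
Qed.

Lemma vert_simplex (P : 'I_d.+1 -> 'rV[R]_d) i :
  P i = \sum_j (if j == i then 1 else 0) *: P j.
Proof.
rewrite (bigD1 i) //= eqxx scale1r big1 ?addr0 // => j /negbTE ->.
by rewrite scale0r.
Qed.

Lemma affine_eval (P : 'I_d.+1 -> 'rV[R]_d) (f : 'rV[R]_d -> R) lam :
  affine_on (simplex P) f -> (forall i, 0 <= lam i) -> \sum_i lam i = 1 ->
  f (\sum_i lam i *: P i) = \sum_i lam i * f (P i).
Proof.
move=> [a [b H]] l0 s1.
have Hp (lam' : 'I_d.+1 -> R) : (forall i, 0 <= lam' i) -> \sum_i lam' i = 1 ->
  f (\sum_i lam' i *: P i) = \sum_l a ord0 l * (\sum_i lam' i * P i ord0 l) + b.
  move=> l0' l1'; rewrite H; last by exists lam'.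
  by congr (_ + _); apply: eq_bigr => l _; rewrite summxE; congr (_ * _);
    apply: eq_bigr => i _; rewrite mxE.
have Hv i : f (P i) = \sum_l a ord0 l * P i ord0 l + b.
  rewrite {1}(vert_simplex P i) Hp; last exact: delta_sum.
    congr (_ + _); apply: eq_bigr => l _; congr (_ * _).
    rewrite (bigD1 i) //= eqxx mul1r big1 ?addr0 // => j /negbTE ->.
    by rewrite mul0r.
  by move=> j; case: ifP.
rewrite Hp // (eq_bigr _ (fun i _ => congr1 (fun u => lam i * u) (Hv i))).
under [RHS]eq_bigr do rewrite mulrDr.
rewrite big_split /= -mulr_suml s1 mul1r; congr (_ + _).
under eq_bigr do rewrite mulr_sumr.
rewrite exchange_big /=; apply: eq_bigr => i _; rewrite mulr_sumr.
by apply: eq_bigr => l _; rewrite mulrCA.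
Qed.

Lemma sum_delta_seq (s : seq 'rV[R]_d) (F : 'rV[R]_d -> R) y :
  uniq s -> y \in s -> \sum_(x <- s) F x * (if x == y then 1 else 0) = F y.
Proof.
elim: s => [//|x s IH] /= /andP[xs us]; rewrite in_cons big_cons.
have [exy|nxy] := eqVneq x y.
  subst x; move=> _; rewrite mulr1 big_seq big1 ?addr0 // => x' x's.
  case: eqP => [exy'|]; last by rewrite mulr0.
  by move: xs; rewrite -exy' x's.
by move=> ys; rewrite mulr0 add0r; exact: IH.
Qed.

Lemma max_mono (F G : 'rV[R]_d -> R) (s : seq 'rV[R]_d) z :
  (forall x, x \in s -> F x - G x <= F z - G z) ->
  \big[Num.max/F z]_(x <- s) F x - F z <= \big[Num.max/G z]_(x <- s) G x - G z.
Proof.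
suff : (forall x, x \in s -> F x - G x <= F z - G z) ->
  \big[Num.max/F z]_(x <- s) F x <= \big[Num.max/G z]_(x <- s) G x + (F z - G z).
  by move=> H /H; lra.
elim: s => [|x s IH] H; first by rewrite !big_nil; lra.
rewrite !big_cons ge_max; apply/andP; split.
  have := H x (mem_head _ _).
  have : G x <= Num.max (G x) (\big[Num.max/G z]_(j <- s) G j) by rewrite le_max lexx.
  lra.
have := IH (fun y ys => H y (@predU1r _ _ _ _ ys)).
have : \big[Num.max/G z]_(j <- s) G j <= Num.max (G x) (\big[Num.max/G z]_(j <- s) G j).
  by rewrite le_max lexx orbT.
lra.
Qed.

Lemma min_mono (F G : 'rV[R]_d -> R) (s : seq 'rV[R]_d) z :
  (forall x, x \in s -> F x - G x <= F z - G z) ->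
  \big[Num.min/F z]_(x <- s) F x - F z <= \big[Num.min/G z]_(x <- s) G x - G z.
Proof.
suff : (forall x, x \in s -> F x - G x <= F z - G z) ->
  \big[Num.min/F z]_(x <- s) F x <= \big[Num.min/G z]_(x <- s) G x + (F z - G z).
  by move=> H /H; lra.
elim: s => [|x s IH] H; first by rewrite !big_nil; lra.
rewrite !big_cons.
have := H x (mem_head _ _).
have := IH (fun y ys => H y (@predU1r _ _ _ _ ys)).
set a := \big[Num.min/F z]_(j <- s) F j; set b := \big[Num.min/G z]_(j <- s) G j.
have h1 : Num.min (F x) a <= F x by rewrite ge_min lexx.
have h2 : Num.min (F x) a <= a by rewrite ge_min lexx orbT.
move=> h3 h4; rewrite -lerBlDr le_min; apply/andP; split; lra.
Qed.

Lemma vert_in n (T : 'I_n -> 'I_d.+1 -> 'rV[R]_d) k i : T k i \in vertices T.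
Proof.
rewrite mem_undup; apply/flatten_mapP; exists k; first by rewrite mem_enum.
by rewrite /vert_list; apply: map_f; rewrite mem_enum.
Qed.

Lemma interp_eval n (T : 'I_n -> 'I_d.+1 -> 'rV[R]_d) phi f k lam :
  hat_basis T phi -> (forall i, 0 <= lam i) -> \sum_i lam i = 1 ->
  interp T phi f (\sum_i lam i *: T k i) = \sum_i lam i * f (T k i).
Proof.
move=> [hV hdelta] l0 l1; rewrite /interp.
transitivity (\sum_(z' <- vertices T)
   f z' * \sum_i lam i * (if z' == T k i then 1 else 0)).
  apply: eq_big_seq => z' hz; congr (_ * _); rewrite affine_eval //.
    by apply: eq_bigr => i _; rewrite hdelta // vert_in.
  exact: (hV z' hz k).
under eq_bigr do rewrite mulr_sumr.
rewrite exchange_big /=; apply: eq_bigr => i _.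
rewrite -(sum_delta_seq _ (fun x => lam i * f x) _ (undup_uniq _) (vert_in _ T k i)).
by apply: eq_bigr => z' _; rewrite mulrCA mulrA.
Qed.

Lemma phi_ge n (T : 'I_n -> 'I_d.+1 -> 'rV[R]_d) phi k lam i :
  hat_basis T phi -> (forall i, 0 <= lam i) -> \sum_i lam i = 1 ->
  lam i <= phi (T k i) (\sum_i lam i *: T k i).
Proof.
move=> [hV hdelta] l0 l1; rewrite affine_eval //; last exact: (hV _ (vert_in _ T k i) k).
rewrite (bigD1 i) //= hdelta ?vert_in // eqxx mulr1 lerDl.
apply: sumr_ge0 => j _; rewrite hdelta ?vert_in //.
by case: ifP => _; rewrite ?mulr1 ?mulr0.
Qed.

Lemma interp_vertex n (T : 'I_n -> 'I_d.+1 -> 'rV[R]_d) phi f z :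
  hat_basis T phi -> z \in vertices T -> interp T phi f z = f z.
Proof.
move=> [hV hdelta] zV; rewrite /interp -(sum_delta_seq _ f _ (undup_uniq _) zV).
by apply: eq_big_seq => z' hz; rewrite hdelta.
Qed.
End H.

Arguments affine_eval {R d P} f {lam}.
Arguments interp_eval {R d n T phi} f {k lam}.
Arguments interp_vertex {R d n T phi} f {z}.

Theorem lemma3p1 (R : realType) (d : nat) (Omega : set 'rV[R]_d)
  (n : nat) (T : 'I_n -> 'I_d.+1 -> 'rV[R]_d) (phi : 'rV[R]_d -> 'rV[R]_d -> R)
  (eps theta : R) (Sth : seq 'rV[R]_d) (z : 'rV[R]_d) (wh vh : 'rV[R]_d -> R) :
  (0 < d)%N ->
  is_domain Omega ->
  is_mesh T Omega ->
  hat_basis T phi ->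
  meshsize T <= eps -> eps <= ediam Omega ->
  0 < theta -> theta <= 1 ->
  dir_set theta Sth ->
  interior_node eps T Omega z ->
  Vh T wh -> Vh T vh ->
  (forall z', Ntilde eps Sth T phi z z' -> wh z' - vh z' <= wh z - vh z) ->
  Splus eps Sth wh z <= Splus eps Sth vh z /\
  Sminus eps Sth vh z <= Sminus eps Sth wh z /\
  neg_lap_diam eps Sth T phi vh z <= neg_lap_diam eps Sth T phi wh z.
Proof.
move=> d0 hD hM hB hme heps th0 th1 [Sn [Ssym Snet]] [zV zin] hVw hVv hN.
have m0 : 0 <= meshsize T.
  by rewrite /meshsize; elim/big_rec: _ => // i y _ hy; rewrite le_max hy orbT.
have e0 : 0 <= eps by exact: le_trans m0 hme.
have key x : x \in stencil eps Sth z -> exists k (lam : 'I_d.+1 -> R),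
    [/\ forall i, 0 <= lam i, \sum_i lam i = 1, x = \sum_i lam i *: T k i &
        forall i, 0 < lam i -> Ntilde eps Sth T phi z (T k i)].
  rewrite in_cons => /orP[/eqP -> | /mapP [v vS ->]].
    move: (zV); rewrite mem_undup => /flatten_mapP [k _ /mapP [i _ ezi]].
    exists k, (fun j => if j == i then 1 else 0); split.
    - by move=> j; case: ifP.
    - exact: delta_sum.
    - by rewrite ezi; exact: vert_simplex.
    - move=> j; case: eqP => [-> _|_]; last by rewrite ltxx.
      by rewrite -ezi; left.
  have [k [lam [l0 [l1 hx]]]] :=
    @stencil_in R d Omega n T eps z v hD hM e0 hme zin (Sn v vS).
  exists k, lam; split => // i li; right; split; first exact: vert_in.
  exists v => //; rewrite hx; have := phi_ge _ _ _ _ _ _ _ i hB l0 l1; move=> h; exact: (lt_le_trans li (h k)).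
have ineq x : x \in stencil eps Sth z ->
    (wh x - vh x <= wh z - vh z) /\
    (interp T phi wh x - interp T phi vh x <= interp T phi wh z - interp T phi vh z).
  move=> /key [k [lam [l0 l1 -> lN]]].
  have core : \sum_i lam i * wh (T k i) - \sum_i lam i * vh (T k i) <= wh z - vh z.
    rewrite -sumrB.
    have -> : wh z - vh z = \sum_i lam i * (wh z - vh z) by rewrite -mulr_suml l1 mul1r.
    apply: ler_sum => i _; rewrite -mulrBr.
    have := l0 i; rewrite le0r => /orP [/eqP -> | li]; first by rewrite !mul0r.
    have := hN _ (lN i li); have := l0 i; nra.
  rewrite (interp_vertex wh hB zV) (interp_vertex vh hB zV).
  rewrite (interp_eval wh hB l0 l1) (interp_eval vh hB l0 l1).
  by rewrite (affine_eval wh (hVw k) l0 l1) (affine_eval vh (hVv k) l0 l1).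
have M1 := @max_mono R d wh vh (stencil eps Sth z) z (fun x xs => (ineq x xs).1).
have M2 := @min_mono R d wh vh (stencil eps Sth z) z (fun x xs => (ineq x xs).1).
have M3 := @max_mono R d _ _ (stencil eps Sth z) z (fun x xs => (ineq x xs).2).
have M4 := @min_mono R d _ _ (stencil eps Sth z) z (fun x xs => (ineq x xs).2).
have ei : 0 <= eps^-1 by rewrite invr_ge0.
rewrite /neg_lap_diam /Splus /Sminus.
split; first nra.
split; nra.
Qed.
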